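(* Let $\mathscr G=(\mathscr V,\mathscr E)$ be a finite connected graph with $N$ vertices, let $M\ge 0$ be an integer, and let $(Y_t)_{t\in\mathbb N}$ be the immediate exchange model on $\mathscr G$ with $M$ coins, started from an arbitrary configuration. Then for every vertex $x\in\mathscr V$ and every $c\in\{0,1,\dots,M\}$, $$\lim_{t\to\infty}P(Y_t(x)=c)=(c+1)\binom{M-c+2N-3}{2N-3}\Big/\binom{M+2N-1}{2N-1}.$$ In particular, when $N$ and $T=M/N$ are large, $\lim_{t\to\infty}P(Y_t(x)=c)\approx \frac{4c}{T^2} e^{-2c/T}$.
   Context: A configuration is a map $\xi:\mathscr V\to\mathbb N$; $\mathscr C_{N,M}$ denotes the set of configurations with $\sum_x\xi(x)=M$. The immediate exchange model is the discrete-time Markov chain on $\mathscr C_{N,M}$ evolving as follows: at each time step $t$, an edge $(x,y)\in\mathscr E$ is chosen uniformly at random, independent random variables $U_1$ uniform on $\{0,1,\dots,Y_t(x)\}$ and $U_2$ uniform on $\{0,1,\dots,Y_t(y)\}$ are drawn, and one sets $Y_{t+1}(x)=Y_t(x)-U_1+U_2$, $Y_{t+1}(y)=Y_t(y)-U_2+U_1$, and $Y_{t+1}(z)=Y_t(z)$ for $z\notin\{x,y\}$. *)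

(* Defs.v *)
From HB Require Import structures.
From mathcomp Require Import all_boot all_order all_algebra.
From mathcomp Require Import all_classical all_reals.
From mathcomp Require Import topology normedtype sequences.
Set Implicit Arguments. Unset Strict Implicit. Unset Printing Implicit Defensive.
Import Order.TTheory GRing.Theory Num.Theory.
Local Open Scope ring_scope.

(* A configuration with at most M coins per site: xi : V -> {0,...,M}.
   The set C_{N,M} is the subset of those with total mass M. *)
Definition conf (V : finType) (M : nat) := {ffun V -> 'I_M.+1}.

Definition in_CNM (V : finType) (M : nat) (xi : conf V M) : bool :=
  (\sum_(z : V) (xi z : nat) == M)%N.

(* Directed edges (ordered pairs of adjacent vertices). Since the dynamics
   is symmetric in (x,y), choosing uniformly an ordered pair is the same as
   choosing uniformly an undirected edge. *)
Definition edges (V : finType) (e : rel V) : {set V * V} :=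
  [set p : V * V | e p.1 p.2].

Definition upd (V : finType) (M : nat) (xi : conf V M) (x y : V) (u1 u2 : nat)
  : conf V M :=
  [ffun z => if z == x then inord ((xi x - u1) + u2)%N
             else if z == y then inord ((xi y - u2) + u1)%N
             else xi z].

Definition iem_kernel (R : realType) (V : finType) (e : rel V) (M : nat)
  (xi eta : conf V M) : R :=
  (#|edges e|%:R)^-1 *
  \sum_(p in edges e)
    \sum_(u1 < (xi p.1).+1) \sum_(u2 < (xi p.2).+1)
      (((xi p.1).+1 * (xi p.2).+1)%N%:R)^-1 *
      (upd xi p.1 p.2 u1 u2 == eta)%:R.

Fixpoint iem_law (R : realType) (V : finType) (e : rel V) (M : nat)
  (xi0 : conf V M) (t : nat) (eta : conf V M) : R :=
  match t with
  | 0 => (eta == xi0)%:R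
  | t'.+1 => \sum_(xi : conf V M) iem_law R e xi0 t' xi * iem_kernel R e xi eta
  end.

Definition iem_prob (R : realType) (V : finType) (e : rel V) (M : nat)
  (xi0 : conf V M) (x : V) (c : nat) (t : nat) : R :=
  \sum_(eta : conf V M | (eta x : nat) == c) iem_law R e xi0 t eta.

(* Main.v *)
Require Import Defs.
From HB Require Import structures.
From mathcomp Require Import all_boot all_order all_algebra.
From mathcomp Require Import all_classical all_reals.
From mathcomp Require Import topology normedtype sequences.
From mathcomp Require Import zify.
Set Implicit Arguments. Unset Strict Implicit. Unset Printing Implicit Defensive.
Lemma hockey r m : (\sum_(0 <= i < m.+1) 'C(m - i + r, r) = 'C(m + r.+1, r.+1))%N.
Proof.
elim: m => [|m IH]; first by rewrite big_nat1 binn add0n binn.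
rewrite big_nat_recl // subn0.
under eq_bigr => i _ do rewrite subSS.
by rewrite IH [in RHS]addSn binS addSnnS addnC.
Qed.

Lemma S2 r m : (\sum_(0 <= i < m.+1) i.+1 * 'C(m - i + r, r) = 'C(m + r.+2, r.+2))%N.
Proof.
elim: m => [|m IH]; first by rewrite big_nat1 binn add0n binn.
rewrite big_nat_recl // subn0 mul1n.
rewrite big_split /= IH hockey.
rewrite [in RHS]addSn binS [(m + r.+2)%N]addnS binS addSnnS binS; lia.
Qed.

Import Order.TTheory GRing.Theory Num.Theory.
Local Open Scope ring_scope.
Import numFieldNormedType.Exports.
Local Open Scope classical_set_scope.

Section Markov.
Variables (R : realType) (T : finType) (K : T -> T -> R).
Hypothesis K_ge0 : forall x y, 0 <= K x y.
Hypothesis K_sum1 : forall x, \sum_y K x y = 1.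

Definition stepm (mu : T -> R) : T -> R := fun y => \sum_x mu x * K x y.
Fixpoint lawm (mu : T -> R) (t : nat) : T -> R :=
  if t is t'.+1 then stepm (lawm mu t') else mu.
Definition dlt (x : T) : T -> R := fun y => (y == x)%:R.

Lemma sum_dlt x : \sum_y dlt x y = 1.
Proof.
rewrite (bigD1 x) //= /dlt eqxx big1 ?addr0 // => y /negbTE -> //.
Qed.

Lemma lawm_add mu t k : lawm mu (t + k) = lawm (lawm mu t) k.
Proof. elim: k => [|k IH]; first by rewrite addn0. by rewrite addnS /= IH. Qed.

Lemma lawm_lin mu k y : lawm mu k y = \sum_x mu x * lawm (dlt x) k y.
Proof.
elim: k y => [|k IH] y.
  rewrite /= (bigD1 y) //= /dlt eqxx mulr1 big1 ?addr0 // => x.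
  by rewrite eq_sym => /negbTE ->; rewrite mulr0.
rewrite [LHS]/= /stepm.
under eq_bigr => z _ do rewrite IH mulr_suml.
rewrite exchange_big /=; apply: eq_bigr => x _; rewrite mulr_sumr.
by apply: eq_bigr => z _; rewrite mulrA.
Qed.

Lemma lawm_D1 x z : lawm (dlt x) 1 z = K x z.
Proof.
rewrite /= /stepm (bigD1 x) //= /dlt eqxx mul1r big1 ?addr0 // => w /negbTE ->.
by rewrite mul0r.
Qed.

Lemma lawm_CK x k y :
  lawm (dlt x) k.+1 y = \sum_z K x z * lawm (dlt z) k y.
Proof.
rewrite -add1n lawm_add lawm_lin; apply: eq_bigr => z _; by rewrite lawm_D1.
Qed.

Lemma lawm_ge0 mu t y : (forall x, 0 <= mu x) -> 0 <= lawm mu t y.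
Proof.
move=> h; elim: t y => [|t IH] y //=.
by apply: sumr_ge0 => x _; rewrite mulr_ge0.
Qed.

Lemma dlt_ge0 x y : 0 <= dlt x y.
Proof. by rewrite /dlt ler0n. Qed.

Lemma lawm_sum mu t : \sum_y lawm mu t y = \sum_x mu x.
Proof.
elim: t => [|t IH] //=; rewrite /stepm exchange_big /= -IH.
by apply: eq_bigr => x _; rewrite -mulr_sumr K_sum1 mulr1.
Qed.

Lemma stepm_l1 nu : \sum_y `|stepm nu y| <= \sum_x `|nu x|.
Proof.
apply: (@le_trans _ _ (\sum_y \sum_x `|nu x| * K x y)).
  apply: ler_sum => y _; apply: (le_trans (ler_norm_sum _ _ _)).
  by apply: ler_sum => x _; rewrite normrM (ger0_norm (K_ge0 _ _)).
rewrite exchange_big /=; apply: ler_sum => x _.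
by rewrite -mulr_sumr K_sum1 mulr1.
Qed.

Definition D1 nu t := \sum_y `|lawm nu t y|.

Lemma D1_mono nu t t' : (t <= t')%N -> D1 nu t' <= D1 nu t.
Proof.
move=> /subnK <-; elim: (t' - t)%N => [|n IH] //=.
by rewrite addSn; apply: le_trans IH; apply: stepm_l1.
Qed.

Lemma lawm_sub mu nu k y :
  lawm (fun x => mu x - nu x) k y = lawm mu k y - lawm nu k y.
Proof.
rewrite (lawm_lin mu) (lawm_lin nu) lawm_lin -sumrB.
by apply: eq_bigr => x _; rewrite mulrBl.
Qed.

Lemma lawm_stat pi t : stepm pi = pi -> lawm pi t = pi.
Proof. by move=> h; elim: t => [|t IH] //=; rewrite IH. Qed.

Section Doeblin.
Variables (S : pred T) (y0 : T) (k : nat) (dl : R).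
Hypothesis Hdl : forall x, S x -> dl <= lawm (dlt x) k y0.

Lemma doeblin nu : (forall x, ~~ S x -> nu x = 0) -> \sum_x nu x = 0 ->
  \sum_y `|lawm nu k y| <= (1 - dl) * \sum_x `|nu x|.
Proof.
move=> hS h0.
pose Q x y := lawm (dlt x) k y - dl * (y == y0)%:R.
have Qge0 x y : S x -> 0 <= Q x y.
  move=> Sx; rewrite /Q; have [->|ne] := eqVneq y y0.
    by rewrite mulr1 subr_ge0 Hdl.
  by rewrite mulr0 subr0 lawm_ge0 // => z; apply: dlt_ge0.
have eQ y : lawm nu k y = \sum_x nu x * Q x y.
  rewrite lawm_lin; under [RHS]eq_bigr => x _ do rewrite mulrBr.
  by rewrite sumrB -mulr_suml h0 mul0r subr0.
have sQ x : \sum_y Q x y = 1 - dl.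
  rewrite /Q sumrB lawm_sum sum_dlt -mulr_sumr; congr (_ - _).
  rewrite (bigD1 y0) //= eqxx big1 ?addr0 ?mulr1 // => y /negbTE -> //.
apply: (@le_trans _ _ (\sum_y \sum_x `|nu x| * Q x y)).
  apply: ler_sum => y _; rewrite eQ; apply: (le_trans (ler_norm_sum _ _ _)).
  apply: ler_sum => x _; case Sx: (S x).
    by rewrite normrM (ger0_norm (Qge0 _ _ Sx)).
  by rewrite hS ?Sx // !(mul0r, normr0).
rewrite exchange_big /= mulr_sumr; apply: ler_sum => x _.
by rewrite -mulr_sumr sQ mulrC.
Qed.
End Doeblin.


Section Conv.
Variables (S : pred T) (pi mu0 : T -> R) (y0 : T) (k : nat) (dl : R).
Hypothesis Sclosed : forall x y, S x -> K x y != 0 -> S y.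
Hypothesis pi_stat : stepm pi = pi.
Hypothesis pi_supp : forall x, ~~ S x -> pi x = 0.
Hypothesis pi_sum : \sum_x pi x = 1.
Hypothesis mu_supp : forall x, ~~ S x -> mu0 x = 0.
Hypothesis mu_sum : \sum_x mu0 x = 1.
Hypothesis Hdl : forall x, S x -> dl <= lawm (dlt x) k y0.
Hypothesis dl_gt0 : 0 < dl.
Hypothesis dl_le1 : dl <= 1.

Lemma lawm_supp mu t y : (forall x, ~~ S x -> mu x = 0) -> ~~ S y -> lawm mu t y = 0.
Proof.
move=> hmu nSy; elim: t y nSy => [|t IH] y nSy /=; first exact: hmu.
rewrite /stepm big1 // => x _; case Sx: (S x).
  have /eqP -> : K x y == 0 by apply: (contraNT (fun h => Sclosed Sx h)) nSy.
  by rewrite mulr0.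
by rewrite IH ?Sx // mul0r.
Qed.

Theorem conv_markov eps : 0 < eps ->
  \forall t \near \oo, \sum_y `|lawm mu0 t y - pi y| <= eps.
Proof.
move=> eps_gt0.
pose nu := fun x => mu0 x - pi x.
have Dt t : \sum_y `|lawm mu0 t y - pi y| = D1 nu t.
  by rewrite /D1; apply: eq_bigr => y _; rewrite /nu lawm_sub (lawm_stat _ pi_stat).
have nu_supp x : ~~ S x -> nu x = 0 by move=> h; rewrite /nu mu_supp // pi_supp // subrr.
have nu_sum : \sum_x nu x = 0 by rewrite /nu sumrB mu_sum pi_sum subrr.
have Dk t : D1 nu (t + k) <= (1 - dl) * D1 nu t.
  rewrite /D1; under eq_bigr => y _ do rewrite lawm_add.
  apply: (doeblin Hdl).
    by move=> x nSx; exact: lawm_supp.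
  by rewrite lawm_sum.
have Dn n : D1 nu (n * k) <= (1 - dl) ^+ n * D1 nu 0.
  elim: n => [|n IH]; first by rewrite mul0n expr0 mul1r.
  rewrite mulSn addnC exprS -mulrA; apply: le_trans (Dk _) _.
  by apply: ler_wpM2l; [rewrite subr_ge0 | exact: IH].
have D0ge0 : 0 <= D1 nu 0 by apply: sumr_ge0 => y _.
have h1 : `|1 - dl| < 1.
  rewrite ger0_norm ?subr_ge0 // ltrBlDr ltrDl //.
have := cvg_expr h1.
move/cvgr0Pnorm_le => /(_ (eps / (D1 nu 0 + 1))).
have epsp : 0 < eps / (D1 nu 0 + 1) by rewrite divr_gt0 // ltr_wpDl.
move=> /(_ epsp) [N _ HN].
exists (N * k)%N => // t /= ht.
rewrite Dt; apply: le_trans (D1_mono _ ht) _; apply: le_trans (Dn N) _.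
have := HN N (leqnn N) => /=.
rewrite ger0_norm ?exprn_ge0 ?subr_ge0 // => hN.
apply: le_trans (ler_wpM2r D0ge0 hN) _.
by rewrite mulrAC ler_pdivrMr ?ltr_wpDl // ler_wpM2l ?ltW // ltrDl ltr01.
Qed.
End Conv.

End Markov.

Section Model.
Variables (R : realType) (V : finType) (e : rel V) (M : nat).
Hypothesis e_irr : irreflexive e.
Local Notation cf := (conf V M).
Local Notation K := (@iem_kernel R V e M).
Local Notation S := (@in_CNM V M).

Lemma iem_law_lawm xi0 t eta : iem_law R e xi0 t eta = lawm K (dlt R xi0) t eta.
Proof.
elim: t eta => [|t IH] eta //=; rewrite /stepm; apply: eq_bigr => xi _.
by rewrite IH.
Qed.

Lemma K_ge0 xi eta : 0 <= K xi eta.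
Proof.
rewrite /iem_kernel mulr_ge0 ?invr_ge0 ?ler0n //.
apply: sumr_ge0 => p _; apply: sumr_ge0 => u1 _; apply: sumr_ge0 => u2 _.
by rewrite mulr_ge0 ?invr_ge0 ?ler0n.
Qed.

Lemma edge_neq p : p \in edges e -> p.1 != p.2.
Proof.
rewrite inE => h; apply/eqP => E; move: h; by rewrite E e_irr.
Qed.

Lemma sum_upd (xi : cf) a b :
  \sum_(eta : cf) \sum_(u1 < (xi a).+1) \sum_(u2 < (xi b).+1)
     (((xi a).+1 * (xi b).+1)%N%:R)^-1 * (upd xi a b u1 u2 == eta)%:R = 1 :> R.
Proof.
rewrite exchange_big /=.
transitivity (\sum_(u1 < (xi a).+1) \sum_(u2 < (xi b).+1)
     (((xi a).+1 * (xi b).+1)%N%:R)^-1 : R).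
  apply: eq_bigr => u1 _; rewrite exchange_big; apply: eq_bigr => u2 _ /=.
  rewrite (bigD1 (upd xi a b u1 u2)) //= eqxx mulr1 big1 ?addr0 // => y.
  by rewrite eq_sym => /negbTE ->; rewrite mulr0.
have hh (c : R) n : c^-1 *+ n = c^-1 * n%:R by rewrite mulr_natr.
rewrite !sumr_const !card_ord -mulrnA hh mulnC.
by rewrite mulVf // pnatr_eq0.
Qed.

Lemma K_sum1 xi : (0 < #|edges e|)%N -> \sum_eta K xi eta = 1.
Proof.
move=> hE; rewrite /iem_kernel -mulr_sumr exchange_big /=.
under eq_bigr => p _ do rewrite sum_upd.
rewrite sumr_const -mulr_natr mul1r mulVf // pnatr_eq0 -lt0n //.
Qed.

Lemma sum_ge_term (I : finType) (P : pred I) (F : I -> R) i :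
  P i -> (forall j, P j -> 0 <= F j) -> F i <= \sum_(j | P j) F j.
Proof.
move=> Pi h; rewrite (bigD1 i) //= lerDl; apply: sumr_ge0 => j /andP[Pj _].
exact: h.
Qed.

Lemma sum2 (f : V -> nat) a b : a != b ->
  (\sum_z f z = f a + f b + \sum_(z | (z != a) && (z != b)) f z)%N.
Proof. by move=> ab; rewrite (bigD1 a) //= (bigD1 b) 1?eq_sym //= addnA. Qed.

Lemma prod2 (f : V -> R) a b : a != b ->
  \prod_z f z = f a * f b * \prod_(z | (z != a) && (z != b)) f z.
Proof. by move=> ab; rewrite (bigD1 a) //= (bigD1 b) 1?eq_sym //= mulrA. Qed.

Lemma S_bound (xi : cf) a b : S xi -> a != b -> (xi a + xi b <= M)%N.
Proof.
move=> /eqP hS ab.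
have := leq_addr (\sum_(z | (z != a) && (z != b)) (xi z : nat)) (xi a + xi b).
by rewrite -(sum2 (fun z => (xi z : nat)) ab) hS.
Qed.

Lemma upd_val (xi : cf) a b u1 u2 : S xi -> a != b -> (u1 <= xi a)%N -> (u2 <= xi b)%N ->
  [/\ (upd xi a b u1 u2 a : nat) = (xi a - u1 + u2)%N,
      (upd xi a b u1 u2 b : nat) = (xi b - u2 + u1)%N
    & forall z, z != a -> z != b -> upd xi a b u1 u2 z = xi z].
Proof.
move=> hS ab h1 h2; have hab := S_bound hS ab.
have ba : (b == a) = false by rewrite eq_sym; exact: negbTE.
split.
- by rewrite ffunE eqxx inordK //; lia.
- by rewrite ffunE ba eqxx inordK //; lia.
- by move=> z za zb; rewrite ffunE (negbTE za) (negbTE zb).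
Qed.

Lemma updS (xi : cf) a b u1 u2 : S xi -> a != b -> (u1 <= xi a)%N -> (u2 <= xi b)%N ->
  S (upd xi a b u1 u2).
Proof.
move=> hS ab h1 h2; have [va vb vz] := upd_val hS ab h1 h2.
have E := eqP hS; rewrite /in_CNM (sum2 (fun z => (xi z : nat)) ab) in E.
rewrite /in_CNM (sum2 _ ab) va vb; apply/eqP; apply: etrans E.
under eq_bigr => z /andP[za zb] do rewrite vz //.
congr (_ + _)%N; lia.
Qed.

Lemma K_supp (xi eta : cf) : K xi eta != 0 -> exists p u1 u2,
  [/\ p \in edges e, (u1 <= xi p.1)%N, (u2 <= xi p.2)%N & upd xi p.1 p.2 u1 u2 = eta].
Proof.
move=> hK.
have [//|H] := pselect (exists p u1 u2,
  [/\ p \in edges e, (u1 <= xi p.1)%N, (u2 <= xi p.2)%N & upd xi p.1 p.2 u1 u2 = eta]).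
exfalso; move/eqP: hK; apply; rewrite /iem_kernel big1 ?mulr0 // => p pE.
rewrite big1 // => u1 _; rewrite big1 // => u2 _.
case: eqP => [E|]; last by rewrite mulr0.
exfalso; apply: H; exists p, u1, u2; split => //; by rewrite -ltnS ltn_ord.
Qed.

Lemma Sclosed (xi eta : cf) : S xi -> K xi eta != 0 -> S eta.
Proof.
move=> hS /K_supp [p [u1 [u2 [pE h1 h2 <-]]]].
exact: updS hS (edge_neq pE) h1 h2.
Qed.

Lemma lex_add (x y z : R) : 0 <= z -> x <= y -> x <= y + z.
Proof. by move=> hz hxy; rewrite -[x]addr0; apply: lerD. Qed.

Definition beta : R := (#|edges e|%:R)^-1 * (((M.+1) * (M.+1))%N%:R)^-1.

Lemma K_low (xi : cf) p u1 u2 : p \in edges e -> (u1 <= xi p.1)%N -> (u2 <= xi p.2)%N ->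
  beta <= K xi (upd xi p.1 p.2 u1 u2).
Proof.
move=> pE h1 h2; rewrite /iem_kernel /beta ler_wpM2l ?invr_ge0 ?ler0n //.
have t0 (q : V * V) (v1 : 'I_(xi q.1).+1) (v2 : 'I_(xi q.2).+1) :
  0 <= (((xi q.1).+1 * (xi q.2).+1)%N%:R)^-1 * (upd xi q.1 q.2 v1 v2 == upd xi p.1 p.2 u1 u2)%:R :> R.
  by rewrite mulr_ge0 ?invr_ge0 ?ler0n.
rewrite (bigD1 p) //; apply: lex_add.
  by apply: sumr_ge0 => q _; apply: sumr_ge0 => v1 _; apply: sumr_ge0 => v2 _; apply: t0.
have h1' : (u1 < (xi p.1).+1)%N by [].
have h2' : (u2 < (xi p.2).+1)%N by [].
rewrite (bigD1 (Ordinal h1')) //; apply: lex_add.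
  by apply: sumr_ge0 => v1 _; apply: sumr_ge0 => v2 _; apply: t0.
rewrite (bigD1 (Ordinal h2')) //; apply: lex_add.
  by apply: sumr_ge0 => v2 _; apply: t0.
rewrite eqxx mulr1 lef_pV2 ?posrE ?ltr0n ?muln_gt0 // ler_nat.
by apply: leq_mul; rewrite ltnS -ltnS ltn_ord.
Qed.
End Model.

Section Stat.
Variables (R : realType) (V : finType) (e : rel V) (M : nat).
Hypothesis e_irr : irreflexive e.
Local Notation cf := (conf V M).
Local Notation K := (@iem_kernel R V e M).
Local Notation S := (@in_CNM V M).

Definition w (xi : cf) : R := \prod_z ((xi z).+1)%:R.
Definition rr (xi : cf) a b : R := \prod_(z | (z != a) && (z != b)) ((xi z).+1)%:R.

Lemma upd_off (xi : cf) a b u1 u2 z : z != a -> z != b -> upd xi a b u1 u2 z = xi z.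
Proof. by move=> za zb; rewrite ffunE (negbTE za) (negbTE zb). Qed.

Lemma swap_cond (xi : cf) a b u1 u2 : S xi -> a != b -> (u1 <= xi a)%N -> (u2 <= xi b)%N ->
  [&& (u2 <= upd xi a b u1 u2 a)%N, (u1 <= upd xi a b u1 u2 b)%N &
      upd (upd xi a b u1 u2) a b u2 u1 == xi].
Proof.
move=> hS ab h1 h2; have [va vb vz] := upd_val hS ab h1 h2.
have ba : (b == a) = false by rewrite eq_sym; exact: negbTE.
rewrite va vb leq_addl leq_addl /=; apply/eqP/ffunP => z.
have xa := ltn_ord (xi a); have xb := ltn_ord (xi b).
rewrite ffunE; have [->|za] := eqVneq z a.
  by apply: val_inj; rewrite /= va inordK; [lia | lia].
have [->|zb] := eqVneq z b; first by apply: val_inj; rewrite /= vb inordK; [lia|lia].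
exact: vz.
Qed.

Definition G (xi eta : cf) a b (u1 u2 : nat) : R :=
  if [&& (u1 <= xi a)%N, (u2 <= xi b)%N & upd xi a b u1 u2 == eta] then rr xi a b else 0.

Lemma G_sym (xi eta : cf) a b u1 u2 : S xi -> S eta -> a != b ->
  G xi eta a b u1 u2 = G eta xi a b u2 u1.
Proof.
move=> hx he ab; rewrite /G.
have E : [&& (u1 <= xi a)%N, (u2 <= xi b)%N & upd xi a b u1 u2 == eta] =
         [&& (u2 <= eta a)%N, (u1 <= eta b)%N & upd eta a b u2 u1 == xi].
  apply/idP/idP.
    by move=> /and3P[h1 h2 /eqP E]; rewrite -E; apply: swap_cond.
  by move=> /and3P[h1 h2 /eqP E]; rewrite -E; apply: swap_cond.
rewrite -E; case: ifP => // /and3P[_ _ /eqP <-].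
by apply: eq_bigr => z /andP[za zb]; rewrite upd_off.
Qed.

Lemma widen_sum n m (F : nat -> R) : (n <= m)%N ->
  \sum_(i < n) F i = \sum_(i < m) (if (i < n)%N then F i else 0).
Proof. by move=> h; rewrite (big_ord_widen m F h) big_mkcond. Qed.

Definition Tm (xi eta : cf) a b : R :=
  \sum_(u1 < (xi a).+1) \sum_(u2 < (xi b).+1)
      (((xi a).+1 * (xi b).+1)%N%:R)^-1 * (upd xi a b u1 u2 == eta)%:R.

Lemma Tm_widen (xi eta : cf) a b : S xi -> a != b ->
  w xi * Tm xi eta a b = \sum_(u1 < M.+1) \sum_(u2 < M.+1) G xi eta a b u1 u2.
Proof.
move=> hS ab.
have wE : w xi = ((xi a).+1 * (xi b).+1)%N%:R * rr xi a b.
  by rewrite /w (prod2 _ ab) natrM.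
have cne0 : ((xi a).+1 * (xi b).+1)%N%:R != 0 :> R by rewrite pnatr_eq0.
rewrite /Tm mulr_sumr.
rewrite (widen_sum (m := M.+1) (fun u1 => w xi * \sum_(u2 < (xi b).+1)
      (((xi a).+1 * (xi b).+1)%N%:R)^-1 * (upd xi a b u1 u2 == eta)%:R)) ?ltn_ord //.
apply: eq_bigr => u1 _.
case: ifP => h1; last first.
  by rewrite big1 // => u2 _; rewrite /G; case: ifP => // /and3P[hh]; rewrite -ltnS h1 in hh.
rewrite mulr_sumr (widen_sum (m := M.+1) (fun u2 => w xi * ((((xi a).+1 * (xi b).+1)%N%:R)^-1 *
      (upd xi a b u1 u2 == eta)%:R))) ?ltn_ord //.
have h1' : (u1 <= xi a)%N by rewrite -ltnS.
apply: eq_bigr => u2 _; rewrite /G h1' /=.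
case: ifP => h2; last by rewrite -ltnS h2.
have h2' : (u2 <= xi b)%N by rewrite -ltnS.
rewrite h2' /= wE mulrAC !mulrA mulfV // mul1r.
by case: (upd xi a b u1 u2 == eta); rewrite ?mul1r ?mul0r.
Qed.

Lemma DB_edge (xi eta : cf) a b : S xi -> S eta -> a != b ->
  w xi * Tm xi eta a b = w eta * Tm eta xi a b.
Proof.
move=> hx he ab; rewrite (Tm_widen _ hx ab) (Tm_widen _ he ab) exchange_big.
by apply: eq_bigr => u1 _; apply: eq_bigr => u2 _; rewrite G_sym.
Qed.

Lemma DB (xi eta : cf) : S xi -> S eta -> w xi * K xi eta = w eta * K eta xi.
Proof.
move=> hx he; rewrite /iem_kernel mulrCA [w eta * _]mulrCA; congr (_ * _).
rewrite !mulr_sumr; apply: eq_bigr => p pE.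
by have := DB_edge hx he (edge_neq e_irr pE); rewrite /Tm.
Qed.

Definition Zs : R := \sum_(xi : cf | S xi) w xi.
Definition piS (eta : cf) : R := if S eta then w eta / Zs else 0.

Lemma w_gt0 (xi : cf) : 0 < w xi.
Proof. by apply: prodr_gt0 => z _; rewrite ltr0n. Qed.

Lemma Zs_gt0 (xi0 : cf) : S xi0 -> 0 < Zs.
Proof.
move=> h; rewrite /Zs (bigD1 xi0) //=; apply: lt_le_trans (w_gt0 xi0) _.
by rewrite lerDl; apply: sumr_ge0 => xi _; apply: ltW; apply: w_gt0.
Qed.

Lemma K_out (xi eta : cf) : S xi -> ~~ S eta -> K xi eta = 0.
Proof.
move=> h1 h2; apply/eqP; apply: (contraNT _ h2) => h; exact: (Sclosed e_irr h1 h).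
Qed.

Lemma piS_stat : (0 < #|edges e|)%N -> stepm K piS = piS.
Proof.
move=> hE; apply: funext => eta; rewrite /stepm /piS.
case Seta: (S eta); last first.
  apply: big1 => xi _; case Sxi: (S xi); last by rewrite mul0r.
  by rewrite K_out ?Seta // mulr0.
transitivity (\sum_xi w eta / Zs * K eta xi).
  apply: eq_bigr => xi _; case Sxi: (S xi).
    by rewrite mulrAC DB // mulrAC.
  by rewrite mul0r (@K_out eta xi) ?Seta ?Sxi // mulr0.
by rewrite -mulr_sumr K_sum1 // mulr1.
Qed.

Lemma piS_supp (eta : cf) : ~~ S eta -> piS eta = 0.
Proof. by rewrite /piS => /negbTE ->. Qed.

Lemma piS_sum (xi0 : cf) : S xi0 -> \sum_eta piS eta = 1.
Proof.
move=> h; rewrite /piS -big_mkcond /= -mulr_suml -/Zs mulfV //.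
by apply: lt0r_neq0; apply: Zs_gt0 h.
Qed.
End Stat.

Section Reach.
Variables (R : realType) (V : finType) (e : rel V) (M : nat).
Hypothesis e_irr : irreflexive e.
Hypothesis e_conn : forall x y : V, connect e x y.
Variable x0 : V.
Local Notation cf := (conf V M).
Local Notation K := (@iem_kernel R V e M).
Local Notation S := (@in_CNM V M).

Fixpoint Aset (n : nat) : {set V} :=
  if n is n'.+1 then Aset n' :|: [set y | [exists z in Aset n', e y z]] else [set x0].

Lemma Aset_ex y : exists n, y \in Aset n.
Proof.
have /connectP [p pth lst] := e_conn y x0.
elim: p y pth lst => [|z p IH] y /= pth lst.
  by exists 0%N; rewrite /= inE lst.
case/andP: pth => eyz pth; have [n Hn] := IH z pth lst.
exists n.+1; rewrite /= inE; apply/orP; right; rewrite inE.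
by apply/existsP; exists z; rewrite Hn eyz.
Qed.

Definition dd y := ex_minn (Aset_ex y).

Lemma dd_x0 : dd x0 = 0%N.
Proof.
rewrite /dd; case: ex_minnP => n _ Hmin.
by apply/eqP; rewrite -leqn0; apply: Hmin; rewrite /= inE.
Qed.

Lemma dd_step y : y != x0 -> exists z, e y z && (dd z < dd y)%N.
Proof.
move=> yx; rewrite {2}/dd; case: ex_minnP => [[|m]] Hn Hmin.
  by move: Hn; rewrite /= inE (negbTE yx).
move: Hn; rewrite /= inE => /orP[Hm|].
  by have := Hmin m Hm; rewrite ltnn.
rewrite inE => /existsP [z /andP[Hz eyz]].
exists z; rewrite eyz /= /dd; case: ex_minnP => k _ Hk.
by rewrite ltnS; apply: Hk.
Qed.

Definition Phi (xi : cf) := (\sum_z xi z * dd z)%N.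

Definition eta0 : cf := [ffun z => if z == x0 then inord M else ord0].

Lemma Phi_eta0 : Phi eta0 = 0%N.
Proof.
rewrite /Phi big1 // => z _; rewrite ffunE; case: eqVneq => [->|_].
  by rewrite dd_x0 muln0.
by rewrite mul0n.
Qed.

Lemma move_step (xi : cf) : S xi -> xi != eta0 -> exists p, [/\ p \in edges e,
  (xi p.1 <= xi p.1)%N, (0 <= xi p.2)%N & (Phi (upd xi p.1 p.2 (xi p.1) 0) < Phi xi)%N].
Proof.
move=> hS hne.
have [y /andP[yx yp]] : exists y, (y != x0) && (0 < xi y)%N.
  case: (boolP [exists y, (y != x0) && (0 < xi y)%N]) => [/existsP //|/existsPn H].
  exfalso; move/negP: hne; apply; apply/eqP/ffunP => z.
  have H0 w : w != x0 -> (xi w : nat) = 0%N.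
    by move=> wx; have := H w; rewrite wx /= lt0n negbK => /eqP.
  rewrite ffunE; case: eqVneq => [->|zx]; apply: val_inj => /=.
    move: hS; rewrite /in_CNM (bigD1 x0) //= big1 ?addn0; last by move=> w /H0.
    by move=> /eqP ->; rewrite inordK.
  by rewrite H0.
have [z /andP[eyz dz]] := dd_step yx.
have yz : y != z by apply/eqP => E; move: eyz; rewrite E e_irr.
exists (y, z); split => //=; first by rewrite inE.
have [va vb vz] := upd_val hS yz (leqnn (xi y)) (leq0n (xi z)).
rewrite /Phi (sum2 _ yz) (sum2 (fun w => xi w * dd w)%N yz) va vb subnn.
under eq_bigr => w /andP[wy wz] do rewrite vz //.
have : (xi y * dd z < xi y * dd y)%N by rewrite ltn_pmul2l.
rewrite subn0 add0n mul0n; nia.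
Qed.

Lemma upd_hold (xi : cf) a b : upd xi a b 0 0 = xi.
Proof.
apply/ffunP => z; rewrite ffunE; case: eqP => [->|_]; first by rewrite subn0 addn0 inord_val.
by case: eqP => [->|_] //; rewrite subn0 addn0 inord_val.
Qed.

Lemma beta_gt0 : (0 < #|edges e|)%N -> 0 < beta R e M.
Proof. by move=> h; rewrite /beta mulr_gt0 // invr_gt0 ltr0n // muln_gt0. Qed.

Lemma beta_le1 : (0 < #|edges e|)%N -> beta R e M <= 1.
Proof.
move=> h; rewrite /beta -[X in _ <= X](mulr1 1); apply: ler_pM; rewrite ?invr_ge0 ?ler0n //.
  by rewrite invf_le1 ?ler1n ?ltr0n.
by rewrite invf_le1 ?ler1n ?ltr0n ?muln_gt0.
Qed.

Lemma Phi_law (p0 : V * V) : p0 \in edges e -> forall j (xi : cf), S xi -> (Phi xi <= j)%N ->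
  beta R e M ^+ j <= lawm K (dlt R xi) j eta0.
Proof.
move=> p0E; have hE : (0 < #|edges e|)%N by apply/card_gt0P; exists p0.
have b0 := ltW (beta_gt0 hE).
elim => [|j IH] xi hS hP.
  case: (eqVneq xi eta0) => [->|hne]; first by rewrite /= /dlt eqxx.
  have [p [_ _ _ hlt]] := move_step hS hne; by move: hP; rewrite leqn0 => /eqP h; rewrite h in hlt.
rewrite lawm_CK exprS.
have step (xi' : cf) : S xi' -> (Phi xi' <= j)%N -> beta R e M <= K xi xi' ->
    beta R e M * beta R e M ^+ j <= \sum_z K xi z * lawm K (dlt R z) j eta0.
  move=> hS' hP' hK.
  apply: le_trans (sum_ge_term (i := xi') (P := xpredT) (F := fun z => K xi z * lawm K (dlt R z) j eta0) isT _).
    by apply: ler_pM; rewrite ?exprn_ge0 //; apply: IH.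
  move=> z _; apply: mulr_ge0; first exact: K_ge0.
  by apply: lawm_ge0 => [a b|w]; [exact: K_ge0 | exact: dlt_ge0].
case: (eqVneq xi eta0) => [E|hne].
  apply: (step eta0); [by rewrite -E | by rewrite Phi_eta0 | ].
  have h := K_low R (xi := eta0) p0E (leq0n _) (leq0n _).
  by rewrite upd_hold in h; rewrite E.
have [p [pE h1 h2 hlt]] := move_step hS hne.
apply: (step (upd xi p.1 p.2 (xi p.1) 0)).
- exact: updS hS (edge_neq e_irr pE) h1 h2.
- by rewrite -ltnS; apply: leq_trans hlt hP.
- exact: K_low.
Qed.
End Reach.

Section Comb.
Variables (R : realType) (V : finType) (M : nat).
Local Notation cf := (conf V M).
Local Notation S := (@in_CNM V M).

Definition pp : {poly R} := \sum_(j < M.+1) (j.+1)%:R *: 'X^j.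

Lemma coef_pp i : (i <= M)%N -> pp`_i = (i.+1)%:R.
Proof.
move=> hi; have hi' : (i < M.+1)%N by [].
rewrite /pp coef_sum (bigD1 (Ordinal hi')) //= coefZ coefXn eqxx mulr1 big1 ?addr0 //.
move=> j hj; rewrite coefZ coefXn; case: eqP => [E|_]; last by rewrite mulr0.
by move: hj; rewrite -val_eqE /= -E eqxx.
Qed.

Lemma coef_ppn n m : (m <= M)%N -> (pp ^+ n.+1)`_m = ('C(m + (2 * n).+1, (2 * n).+1))%:R.
Proof.
elim: n m => [|n IH] m hm.
  by rewrite expr1 coef_pp // muln0 bin1 addn1.
rewrite exprS coefM.
transitivity ((\sum_(0 <= j < m.+1) j.+1 * 'C(m - j + (2 * n).+1, (2 * n).+1))%N%:R : R).
  rewrite big_mkord natr_sum; apply: eq_bigr => j _.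
  have hj : (j <= M)%N by apply: leq_trans hm; rewrite -ltnS.
  by rewrite coef_pp // IH ?natrM //; apply: leq_trans (leq_subr _ _) hm.
rewrite S2; congr ('C(_, _))%:R; lia.
Qed.

Lemma prod_poly (P : V -> 'I_M.+1 -> bool) :
  \prod_z \sum_(j < M.+1) (if P z j then (j.+1)%:R *: 'X^j else 0 : {poly R}) =
  \sum_(f : cf) (if [forall z, P z (f z)] then w R f *: 'X^(\sum_z (f z : nat)) else 0).
Proof.
rewrite bigA_distr_bigA; apply: eq_bigr => f _.
case: forallP => H.
  rewrite (eq_bigr (fun z => ((f z).+1%:R *: 'X^(f z) : {poly R}))); last by move=> z _; rewrite H.
  by rewrite scaler_prod prodrXr.
have [z Hz] : exists z, ~~ P z (f z).
  by apply/existsP; apply: contraT => /existsPn h; exfalso; apply: H => z; apply/negPn/h.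
by rewrite (bigD1 z) //= (negbTE Hz) mul0r.
Qed.

Lemma coef_sumf (A : pred cf) :
  (\sum_(f : cf) (if A f then w R f *: 'X^(\sum_z (f z : nat)) else 0))`_M =
  \sum_(f | S f && A f) w R f.
Proof.
rewrite coef_sum [RHS]big_mkcond /=; apply: eq_bigr => f _.
rewrite /in_CNM; case: (A f); last by rewrite coef0 andbF.
by rewrite coefZ coefXn andbT eq_sym; case: eqP; rewrite ?mulr1 ?mulr0.
Qed.

Lemma sumS_w n : #|V| = n.+1 ->
  \sum_(f : cf | S f) w R f = ('C(M + (2 * n).+1, (2 * n).+1))%:R.
Proof.
move=> hV.
rewrite (eq_bigl (fun f => S f && [forall z : V, true])); last first.
  by move=> f /=; apply/esym; rewrite andb_idr // => _; apply/forallP.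
rewrite -(coef_sumf (fun f : cf => [forall z : V, true])) -(prod_poly (fun _ _ => true)).
have -> : \prod_(z : V) \sum_(j < M.+1) (if true then (j.+1)%:R *: 'X^j else 0 : {poly R})
   = pp ^+ #|V| by rewrite prodr_const.
by rewrite hV coef_ppn.
Qed.

Lemma sumSx_w (x : V) c n : (c <= M)%N -> #|V| = n.+2 ->
  \sum_(f : cf | S f && ((f x : nat) == c)) w R f =
  (c.+1 * 'C(M - c + (2 * n).+1, (2 * n).+1))%N%:R.
Proof.
move=> hc hV.
rewrite (eq_bigl (fun f => S f && [forall z, (z == x) ==> ((f z : nat) == c)])); last first.
  move=> f /=; apply: andb_id2l => _; apply/idP/forallP.
    by move=> /eqP h z; apply/implyP => /eqP ->; apply/eqP.
  by move=> h; exact: (implyP (h x) (eqxx x)).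
rewrite -(coef_sumf (fun f : cf => [forall z, (z == x) ==> ((f z : nat) == c)])).
rewrite -(prod_poly (fun z (j : 'I_M.+1) => (z == x) ==> ((j : nat) == c))).
rewrite (bigD1 x) //=.
rewrite [X in _ * X](eq_bigr (fun _ => pp)); last first.
  by move=> z /negbTE zx; rewrite zx.
rewrite prodr_const cardC1 hV /=.
have hc' : (c < M.+1)%N by [].
rewrite eqxx /= (bigD1 (Ordinal hc')) //= eqxx big1 ?addr0; last first.
  move=> j hj; case: eqP => [E|] //; move: hj; by rewrite -val_eqE /= E eqxx.
rewrite -scalerAl coefZ coefXnM ltnNge hc /= coef_ppn ?leq_subr //.
by rewrite natrM.
Qed.
End Comb.

Unset Implicit Arguments.

Theorem theorem2 (R : realType) (V : finType) (e : rel V)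
  (e_sym : symmetric e) (e_irr : irreflexive e)
  (e_conn : forall x y : V, connect e x y)
  (N_ge2 : (1 < #|V|)%N) (M : nat) (xi0 : conf V M) (xi0C : in_CNM xi0)
  (x : V) (c : nat) (cM : (c <= M)%N) :
  iem_prob R e xi0 x c t @[t --> \oo] -->
    ((c.+1 * 'C((M - c) + (2 * #|V| - 3), 2 * #|V| - 3))%N%:R
       / ('C(M + 2 * #|V| - 1, 2 * #|V| - 1))%N%:R : R).
Proof.
have [p0 p0E] : exists p0, p0 \in edges e.
  have [y [_ _ xy]] : exists y, [/\ x \in V, y \in V & x != y].
    by have /card_gt1P [a [b [_ _ ab]]] := N_ge2; case: (eqVneq x a) => [->|xa];
      [exists b | exists a].
  have /connectP [[|z p] pth lst] := e_conn x y.
    by move: xy; rewrite lst eqxx.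
  by exists (x, z); rewrite inE; case/andP: pth.
have hE : (0 < #|edges e|)%N by apply/card_gt0P; exists p0.
pose K := iem_kernel R e (M:=M).
pose Kb := (\sum_z M * dd e_conn x z)%N.
have Hdl : forall xi, in_CNM xi -> beta R e M ^+ Kb <= lawm K (dlt R xi) Kb (eta0 M x).
  move=> xi hS; apply: (Phi_law R e_irr p0E) => //.
  by apply: leq_sum => z _; rewrite leq_mul2r -ltnS ltn_ord orbT.
have mu_supp : forall y : conf V M, ~~ in_CNM y -> dlt R xi0 y = 0.
  by move=> y; rewrite /dlt; case: eqVneq => [->|//]; rewrite xi0C.
have hb0 := beta_gt0 R M hE; have hb1 := beta_le1 R M hE.
have conv := conv_markov (@K_ge0 R V e M) (fun xi => K_sum1 R xi hE)
  (fun xi eta => @Sclosed R V e M e_irr xi eta) (piS_stat R M e_irr hE)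
  (@piS_supp R V M) (piS_sum R xi0C) (mu0 := dlt R xi0) mu_supp (sum_dlt R xi0) Hdl
  (exprn_gt0 _ hb0) (exprn_ile1 _ (ltW hb0) hb1).
have [n hn] : exists n, #|V| = n.+2.
  by exists (#|V| - 2)%N; lia.
have Lval : \sum_(eta : conf V M | (eta x : nat) == c) piS R eta =
    ((c.+1 * 'C((M - c) + (2 * #|V| - 3), 2 * #|V| - 3))%N%:R
       / ('C(M + 2 * #|V| - 1, 2 * #|V| - 1))%N%:R : R).
  rewrite /piS -big_mkcondr /= -mulr_suml.
  rewrite (eq_bigl (fun eta => in_CNM eta && ((eta x : nat) == c))); last first.
    by move=> eta; rewrite andbC.
  rewrite (sumSx_w R x cM hn) /Zs (sumS_w R M (n := n.+1) hn).
  have -> : (2 * #|V| - 3 = (2 * n).+1)%N by rewrite hn; lia.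
  have -> : (M + 2 * #|V| - 1 = M + (2 * n.+1).+1)%N by rewrite hn; lia.
  have -> : (2 * #|V| - 1 = (2 * n.+1).+1)%N by rewrite hn; lia.
  by [].
rewrite -Lval; apply/cvgrPdist_le => eps heps.
have := conv eps heps; apply: filterS => t ht.
rewrite /iem_prob -sumrB.
apply: le_trans (ler_norm_sum _ _ _) _; apply: le_trans ht.
rewrite [X in _ <= X](bigID (fun eta : conf V M => (eta x : nat) == c)) /=.
apply: lex_add; first by apply/sumr_ge0 => eta _; apply: normr_ge0.
apply: ler_sum => eta _; by rewrite iem_law_lawm distrC.

Qed.
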